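(* Let $\sigma=(a_1,\ldots,a_s)$ be a partition of the positive integer $r$ with $a_1\ge a_2\ge\cdots\ge a_s\ge 1$, let $n\ge s$ and $q\ge a_1$, and let $H=H(n,r,q\mid\sigma)$. Let $1\le k\le r-1$. Then \[\alpha_k(H)=\max\Big\{\, q\,(t(B)-1)+\sum_{i=t(B)}^{s} b_i+(n-s)\,b_s \;:\; B=(b_1,\ldots,b_n)\in M(q,k,\sigma)\Big\}.\]
   Context: A $\sigma$-hypergraph $H=H(n,r,q\mid\sigma)$, for a partition $\sigma=(a_1,\ldots,a_s)$ of $r$ with $s=s(\sigma)$ parts, is the $r$-uniform hypergraph whose vertex set is the disjoint union of $n$ classes $V_1,\ldots,V_n$, each of size $q$; an $r$-subset $K$ of vertices is an edge iff the multiset of non-zero values $|K\cap V_i|$ ($1\le i\le n$) equals $\sigma$. For $1\le k\le r-1$, a set $S$ of vertices of an $r$-uniform hypergraph is $k$-independent if $|E\cap S|\le k$ for every edge $E$; $\alpha_k(H)$ is the largest cardinality of a $k$-independent set. A sequence $B=(b_1,\ldots,b_n)$ of non-negative integers is $(q,k,\sigma)$-feasible if $b_1\ge b_2\ge\cdots\ge b_n$, $b_j=b_s$ for all $j\ge s$, $q\ge\max\{a_1,b_1\}$, and $\sum_{i=1}^{s}\min\{a_i,b_i\}=k$. A feasible sequence $B^*$ dominates a feasible sequence $B$ if $b^*_i\ge b_i$ for all $i$ and $\sum_i b^*_i>\sum_i b_i$; a feasible sequence is maximal if no feasible sequence dominates it. $M(q,k,\sigma)$ is the set of all maximal $(q,k,\sigma)$-feasible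 sequences. For a feasible sequence $B$, $t(B)$ denotes the smallest index $t\in\{1,\ldots,s\}$ with $b_t<a_t$ (such an index exists since $k<r$). *)

(* Defs.v *)
From mathcomp Require Import all_boot.
Set Implicit Arguments. Unset Strict Implicit. Unset Printing Implicit Defensive.

(* Conventions: sigma = (a_1,...,a_s) is a seq nat, a_i = nth 0 sigma (i-1).
   Vertices of H(n,r,q|sigma) are pairs (i, j) : 'I_n * 'I_q; class V_i = {(i, _)}.
   A sequence B = (b_1,...,b_n) is a seq nat of size n, b_i = nth 0 B (i-1). *)

Section SigmaHypergraph.
Variables (n q : nat) (sigma : seq nat).

Definition vtx := ('I_n * 'I_q)%type.

Definition class_count (K : {set vtx}) (i : 'I_n) : nat :=
  #|[set v in K | v.1 == i]|.

Definition is_edge (K : {set vtx}) : bool :=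
  (#|K| == sumn sigma) &&
  perm_eq [seq c <- [seq class_count K i | i <- enum 'I_n] | 0 < c] sigma.

Definition k_independent (k : nat) (S : {set vtx}) : bool :=
  [forall E : {set vtx}, is_edge E ==> (#|E :&: S| <= k)].

Definition alpha_k (k : nat) : nat :=
  \max_(S : {set vtx} | k_independent k S) #|S|.

End SigmaHypergraph.

Section Feasible.
Variables (n q k : nat) (sigma : seq nat).

Local Notation s := (size sigma).
Local Notation a i := (nth 0 sigma i).   (* 0-based: a i = a_{i+1} *)

Definition feasible (B : seq nat) : Prop :=
  [/\ size B = n,
      sorted geq B,
      (forall j, s.-1 <= j < n -> nth 0 B j = nth 0 B s.-1),
      maxn (a 0) (nth 0 B 0) <= q
    & \sum_(i < s) minn (a i) (nth 0 B i) = k].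

Definition dominates (Bs B : seq nat) : Prop :=
  (forall i, i < n -> nth 0 B i <= nth 0 Bs i) /\
  \sum_(i < n) nth 0 B i < \sum_(i < n) nth 0 Bs i.

Definition maximal_feasible (B : seq nat) : Prop :=
  feasible B /\ ~ (exists Bs, feasible Bs /\ dominates Bs B).

(* t(B): smallest 1-based index t in {1..s} with b_t < a_t *)
Definition tB (B : seq nat) : nat :=
  (find (fun i => nth 0 B i < a i) (iota 0 s)).+1.

Definition value (B : seq nat) : nat :=
  q * (tB B).-1 + \sum_((tB B).-1 <= i < s) nth 0 B i + (n - s) * nth 0 B s.-1.

End Feasible.

(* Main.v *)
Require Import Defs.
From mathcomp Require Import all_boot.
From mathcomp Require Import zify.
From Stdlib Require Import Classical.

Lemma sum_ltn c N : \sum_(t < N) (t < c : nat) = minn c N.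
Proof.
elim: N => [|N IH]; first by rewrite big_ord0 minn0.
rewrite big_ord_recr /= IH; case: (ltnP N c) => h /=; lia.
Qed.

Lemma minn_layer x y N : minn x y <= N ->
  minn x y = \sum_(t < N) ((t < x) && (t < y) : nat).
Proof.
move=> h; rewrite (eq_bigr (fun t : 'I_N => (t < minn x y : nat))).
  by rewrite sum_ltn; lia.
by move=> t _; rewrite leq_min.
Qed.

Lemma count_nth0 (p : pred nat) s n : size s = n ->
  count p s = \sum_(m < n) p (nth 0 s m).
Proof.
move=> <-; elim: s => [|x s IH]; first by rewrite big_ord0.
by rewrite /= big_ord_recl /= IH.
Qed.

Lemma sumn_nth0 s n : size s = n -> sumn s = \sum_(m < n) nth 0 s m.
Proof.
move=> <-; elim: s => [|x s IH]; first by rewrite big_ord0.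
by rewrite /= big_ord_recl /= IH.
Qed.

Lemma geq_trans' : transitive geq.
Proof. by move=> y x z h1 h2; exact: leq_trans h2 h1. Qed.

Lemma sorted_mono X i j : sorted geq X -> i <= j -> nth 0 X j <= nth 0 X i.
Proof.
move=> hs hij; case: (ltnP j (size X)) => hj.
  have := @sorted_leq_nth _ geq geq_trans' (fun x => leqnn x) 0 X hs i j.
  rewrite !inE => H; apply: H => //; exact: leq_ltn_trans hij hj.
by rewrite (nth_default 0 hj).
Qed.

Lemma sorted_prefix t X m : sorted geq X -> m < size X ->
  (t < nth 0 X m) = (m < count (fun u => t < u) X).
Proof.
elim: X m => [|x X IH] m //= hs hm.
have hX : sorted geq X by exact: path_sorted hs.
have hall : all (geq x) X := order_path_min geq_trans' hs.
have hle : forall u, u \in X -> u <= x by move=> u /(allP hall).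
case: (ltnP t x) => htx.
  case: m hm => [|m] hm //=.
  by rewrite IH // add1n ltnS.
have c0 : count (fun u => t < u) X = 0.
  apply/eqP; rewrite -leqn0 leqNgt -has_count; apply/hasP => -[u hu htu].
  have := hle u hu; lia.
rewrite c0 /=; case: m hm => [|m] hm /=; first by rewrite ltnNge htx.
have := hle (nth 0 X m) (mem_nth 0 hm); lia.
Qed.

Lemma rearr n x X y : size x = n -> size X = n -> size y = n ->
  sorted geq X -> sorted geq y ->
  (forall t, count (fun u => t < u) x = count (fun u => t < u) X) ->
  \sum_(m < n) minn (nth 0 x m) (nth 0 y m) <= \sum_(m < n) minn (nth 0 X m) (nth 0 y m).
Proof.
move=> hx hX hy sX sy hc.
set N := \sum_(m < n) (nth 0 x m + nth 0 X m).
have bd : forall m : 'I_n, nth 0 x m + nth 0 X m <= N.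
  by move=> m; rewrite /N (bigD1 m) //= leq_addr.
rewrite (eq_bigr (fun m : 'I_n => \sum_(t < N) ((t < nth 0 x m) && (t < nth 0 y m) : nat))); last first.
  by move=> m _; apply: minn_layer; have := bd m; lia.
rewrite [X in _ <= X](eq_bigr (fun m : 'I_n => \sum_(t < N) ((t < nth 0 X m) && (t < nth 0 y m) : nat))); last first.
  by move=> m _; apply: minn_layer; have := bd m; lia.
rewrite (exchange_big _ _ (index_enum _)) [X in _ <= X](exchange_big _ _ (index_enum _)).
apply: leq_sum => t _.
have e1 : \sum_(m < n) ((t < nth 0 X m) && (t < nth 0 y m) : nat)
   = \sum_(m < n) ((m < count (fun u => t < u) X) && (m < count (fun u => t < u) y) : nat).
  apply: eq_bigr => m _.
  by rewrite (sorted_prefix t X m sX) ?hX // (sorted_prefix t y m sy) ?hy.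
rewrite e1 [X in _ <= X](eq_bigr (fun m : 'I_n => (m < minn (count (fun u => t < u) X) (count (fun u => t < u) y) : nat))); last first.
  by move=> m _; rewrite leq_min.
rewrite sum_ltn.
have cX := count_size (fun u => t < u) X.
have cy := count_size (fun u => t < u) y.
have l1 : \sum_(m < n) ((t < nth 0 x m) && (t < nth 0 y m) : nat) <= count (fun u => t < u) x.
  rewrite (count_nth0 _ _ _ hx); apply: leq_sum => m _ /=; by case: (t < nth 0 x m); case: (t < nth 0 y m).
have l2 : \sum_(m < n) ((t < nth 0 x m) && (t < nth 0 y m) : nat) <= count (fun u => t < u) y.
  rewrite (count_nth0 _ _ _ hy); apply: leq_sum => m _ /=; by case: (t < nth 0 x m); case: (t < nth 0 y m).
rewrite hc in l1. rewrite hX in cX; rewrite hy in cy. move: l1 l2 cX cy. set A := count _ X. set B := count _ y. set Z := \sum_(_ < _) _. move=> *. lia.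
Qed.
Section Main.
Variables (n q k : nat) (sigma : seq nat).
Hypothesis Hsig : sorted geq sigma.
Hypothesis Hpos : all (fun a => 0 < a) sigma.
Hypothesis Hsn : size sigma <= n.
Hypothesis Hq : nth 0 sigma 0 <= q.
Hypothesis Hk : k < sumn sigma.

Local Notation s := (size sigma).
Local Notation a i := (nth 0 sigma i).

Lemma s_gt0 : 0 < s.
Proof. by move: Hk; case: sigma. Qed.

Lemma n_gt0 : 0 < n.
Proof. exact: leq_trans s_gt0 Hsn. Qed.

Lemma a_mono i j : i <= j -> a j <= a i.
Proof. exact: sorted_mono. Qed.

Lemma a_le_q i : a i <= q.
Proof. have := a_mono 0 i (leq0n i); have := Hq; lia. Qed.

Lemma sumn_sig : sumn sigma = \sum_(i < s) a i.
Proof. exact: sumn_nth0. Qed.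

Lemma sum_sigma_n (F : nat -> nat) :
  \sum_(m < n) minn (a m) (F m) = \sum_(m < s) minn (a m) (F m).
Proof.
rewrite (big_ord_widen n (fun m => minn (a m) (F m)) Hsn).
rewrite [LHS](bigID (fun m : 'I_n => m < s)) /=.
rewrite [X in _ + X = _]big1 ?addn0 //.
by move=> m; rewrite -leqNgt => hm; rewrite nth_default // min0n.
Qed.

Definition Inv (f : nat -> nat) :=
  [/\ forall i j, i <= j < n -> f j <= f i,
      forall m, s.-1 <= m < n -> f m = f s.-1,
      f 0 <= q
    & \sum_(i < s) minn (a i) (f i) <= k].

Lemma grow_step f : Inv f -> \sum_(i < s) minn (a i) (f i) < k ->
  exists g, [/\ Inv g, \sum_(i < s) minn (a i) (g i) = (\sum_(i < s) minn (a i) (f i)).+1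
    & \sum_(m < n) f m <= \sum_(m < n) g m].
Proof.
move=> [fm ft f0 fk] hlt.
have exj : exists j, (j < s) && (f j < a j).
  case: (boolP [exists j : 'I_s, f j < a j]) => [/existsP [j hj]|hno].
    by exists j; rewrite ltn_ord.
  exfalso.
  have e : \sum_(i < s) minn (a i) (f i) = sumn sigma.
    rewrite sumn_sig; apply: eq_bigr => i _; apply/minn_idPl.
    by move: hno; rewrite negb_exists => /forallP /(_ i); rewrite -leqNgt.
  move: hlt Hk; rewrite e; lia.
case: (ex_minnP exj) => j /andP [hjs hfj] hmin.
have K1 : forall i, i < j -> f j < f i.
  move=> i hij.
  have his : i < s by exact: ltn_trans hij hjs.
  have : ~~ ((i < s) && (f i < a i)).
    by apply/negP => /hmin; rewrite leqNgt hij.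
  rewrite his /= -leqNgt => hai.
  have := a_mono _ _ (ltnW hij); lia.
pose incr m := if j < s.-1 then m == j else s.-1 <= m.
have K2 : forall m, m < n -> incr m -> j <= m /\ f m = f j.
  move=> m hm; rewrite /incr; case: ifP => hj.
    by move/eqP => ->.
  move=> hm'; have ej : j = s.-1 by move: hj hjs s_gt0; lia.
  by split; [rewrite ej | rewrite ej ft // hm' hm].
have K3 : forall m, m < s -> incr m = (m == j).
  move=> m hm; rewrite /incr; case: ifP => hj //.
  have ej : j = s.-1 by move: hj hjs s_gt0; lia.
  by rewrite ej; apply/idP/eqP; move: hm; lia.
have sumj : \sum_(i < s) (nat_of_ord i == j : nat) = 1.
  rewrite (bigD1 (Ordinal hjs)) //= eqxx big1 // => i /negbTE.
  by rewrite -val_eqE /= => ->.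
have hsg : \sum_(i < s) minn (a i) (f i + incr i) = (\sum_(i < s) minn (a i) (f i)).+1.
  rewrite (eq_bigr (fun i : 'I_s => minn (a i) (f i) + (nat_of_ord i == j : nat))).
    by rewrite big_split /= sumj addn1.
  move=> i _; rewrite K3 //; case: eqP => [->|_] /=.
    by move: hfj; lia.
  by rewrite /= !addn0.
exists (fun m => f m + incr m); split => //.
- split.
  + move=> i j' /andP [hij hj'n].
    have hin : i < n by exact: leq_ltn_trans hij hj'n.
    case hi: (incr j'); case hii: (incr i) => /=.
    * by rewrite leq_add2r fm // hij hj'n.
    * have [hj1 hj2] := K2 j' hj'n hi.
      have hij' : i < j.
        rewrite ltnNge; apply/negP => hji; move: hii; rewrite /incr.
        case: ifP => hj.
          move/negbT; move: hi; rewrite /incr hj => /eqP ej'.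
          rewrite -ej' in hji; move: hij hji; rewrite ej'; lia.
        move/negbT; rewrite -ltnNge => hlt'.
        move: hj hjs hji hlt'; lia.
      have := K1 i hij'; lia.
    * rewrite addn0; have := fm i j'; rewrite hij hj'n => /(_ isT); lia.
    * by rewrite !addn0 fm // hij hj'n.
  + move=> m /andP [hm1 hm2].
    have hs1n : s.-1 < n by move: s_gt0 Hsn; lia.
    rewrite ft ?hm1 ?hm2 //.
    congr (_ + _); rewrite /incr; case: ifP => hj.
      by move: hj hm1; case: (m == j) / eqP; case: (s.-1 == j) / eqP; lia.
    by rewrite hm1 leqnn.
  + case hi0: (incr 0) => /=.
      have [hj1 hj2] := K2 0 n_gt0 hi0.
      have ej : j = 0 by lia.
      rewrite -ej; have := a_le_q j; lia.
    by rewrite addn0.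
  + by rewrite hsg.
- by apply: leq_sum => m _; rewrite leq_addr.
Qed.


Lemma grow f : Inv f -> exists g, [/\ Inv g, \sum_(i < s) minn (a i) (g i) = k
    & \sum_(m < n) f m <= \sum_(m < n) g m].
Proof.
move=> hf; move: {2}(k - \sum_(i < s) minn (a i) (f i)) (erefl (k - \sum_(i < s) minn (a i) (f i))) => d.
elim: d f hf => [|d IH] f hf hd.
  exists f; split => //; case: hf => _ _ _ hk'; move: hd hk'; lia.
have hlt : \sum_(i < s) minn (a i) (f i) < k by move: hd; lia.
have [g [hg hsg hfg]] := grow_step f hf hlt.
have hd' : k - \sum_(i < s) minn (a i) (g i) = d by rewrite hsg; move: hd; lia.
have [h [hh hsh hgh]] := IH g hg hd'.
by exists h; split => //; exact: leq_trans hfg hgh.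
Qed.

Lemma feasible_of_Inv f : Inv f -> \sum_(i < s) minn (a i) (f i) = k ->
  feasible n q k sigma (mkseq f n).
Proof.
move=> [fm ft f0 fk] hk; split.
- by rewrite size_mkseq.
- apply/(sortedP 0) => i; rewrite size_mkseq => hi.
  rewrite !nth_mkseq //; first by apply: fm; rewrite leqnSn hi.
  exact: ltnW.
- move=> j /andP [hj1 hj2]; rewrite !nth_mkseq //; first by apply: ft; rewrite hj1.
  by move: s_gt0 Hsn; lia.
- by rewrite nth_mkseq ?n_gt0 // geq_max Hq.
- rewrite -hk; apply: eq_bigr => i _; rewrite nth_mkseq //.
  exact: leq_trans (ltn_ord i) Hsn.
Qed.

Lemma feas_mono B i j : feasible n q k sigma B -> i <= j -> nth 0 B j <= nth 0 B i.
Proof. by case=> _ hs _ _ _; exact: sorted_mono. Qed.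

Lemma feas_le_q B i : feasible n q k sigma B -> nth 0 B i <= q.
Proof.
move=> hB; have := feas_mono B 0 i hB (leq0n i); case: hB => _ _ _ hq _.
move: hq; rewrite geq_max => /andP [_ h2]; lia.
Qed.

Lemma bounded_sum B : feasible n q k sigma B -> \sum_(i < n) nth 0 B i <= n * q.
Proof.
move=> hB; apply: leq_trans (_ : \sum_(i < n) q <= _).
  by apply: leq_sum => i _; exact: feas_le_q.
by rewrite sum_nat_const card_ord.
Qed.

Lemma maximize B : feasible n q k sigma B -> exists B',
  maximal_feasible n q k sigma B' /\ \sum_(i < n) nth 0 B i <= \sum_(i < n) nth 0 B' i.
Proof.
move=> hB; move: {2}(n * q - \sum_(i < n) nth 0 B i) (leqnn (n * q - \sum_(i < n) nth 0 B i)) => d.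
elim: d B hB => [|d IH] B hB hd;
  (case: (classic (exists Bs, feasible n q k sigma Bs /\ dominates n Bs B)) =>
    [[Bs [hBs [_ hlt]]]|hno]; last by exists B).
- have := bounded_sum Bs hBs; have := bounded_sum B hB; move: hd hlt; lia.
- have := bounded_sum Bs hBs; have := bounded_sum B hB => hb1 hb2.
  have hd' : n * q - \sum_(i < n) nth 0 Bs i <= d by move: hd hlt hb1 hb2; lia.
  have [B' [hB' hs']] := IH Bs hBs hd'.
  by exists B'; split => //; exact: leq_trans (ltnW hlt) hs'.
Qed.

Definition tp (B : seq nat) := find (fun i => nth 0 B i < a i) (iota 0 s).
Definition Cf (B : seq nat) m := if m < tp B then q else nth 0 B m.

Lemma tp_le B : tp B <= s.
Proof. by rewrite /tp; have := find_size (fun i => nth 0 B i < a i) (iota 0 s); rewrite size_iota. Qed.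

Lemma before_tp B m : m < tp B -> a m <= nth 0 B m.
Proof.
move=> hm; have := before_find 0 hm; rewrite nth_iota ?add0n.
  by move/negbT; rewrite -leqNgt.
exact: leq_trans hm (tp_le B).
Qed.

Lemma value_sumC B : feasible n q k sigma B -> value n q sigma B = \sum_(m < n) Cf B m.
Proof.
move=> hB; rewrite /value /tB /= -/(tp B).
have ht := tp_le B.
have htn : tp B <= n by exact: leq_trans ht Hsn.
rewrite -(big_mkord xpredT) (@big_cat_nat _ _ _ (tp B) 0 n _ _ (leq0n _) htn) /=.
rewrite (@big_cat_nat _ _ _ s (tp B) n _ _ ht Hsn) /=.
rewrite (eq_big_nat _ _ (F1 := Cf B) (F2 := fun=> q)); last first.
  by move=> i /andP [_ hi]; rewrite /Cf hi.
rewrite (eq_big_nat _ _ (m := tp B) (F1 := Cf B) (F2 := fun i => nth 0 B i)); last first.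
  by move=> i /andP [hi _]; rewrite /Cf ltnNge hi.
rewrite (eq_big_nat _ _ (m := s) (F1 := Cf B) (F2 := fun=> nth 0 B s.-1)); last first.
  move=> i /andP [hi1 hi2]; rewrite /Cf ltnNge (leq_trans ht hi1) /=.
  case: hB => _ _ ht' _ _; apply: ht'; rewrite hi2 andbT; lia.
rewrite !sum_nat_const_nat subn0; lia.
Qed.

Lemma value_ge_sum B : feasible n q k sigma B -> \sum_(m < n) nth 0 B m <= value n q sigma B.
Proof.
move=> hB; rewrite value_sumC //; apply: leq_sum => m _; rewrite /Cf.
by case: ifP => _ //; exact: feas_le_q.
Qed.

Lemma Cf_mono B i j : feasible n q k sigma B -> i <= j -> Cf B j <= Cf B i.
Proof.
move=> hB hij; rewrite /Cf; case: ifP => hj; case: ifP => hi //.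
- exfalso; move: hi hj hij; lia.
- exact: feas_le_q.
- exact: feas_mono.
Qed.

Lemma Cf_le_q B m : feasible n q k sigma B -> Cf B m <= q.
Proof. by move=> hB; rewrite /Cf; case: ifP => _ //; exact: feas_le_q. Qed.

Lemma Cf_sum B : feasible n q k sigma B -> \sum_(m < n) minn (a m) (Cf B m) = k.
Proof.
move=> hB; rewrite sum_sigma_n; case: (hB) => _ _ _ _ <-.
apply: eq_bigr => i _; rewrite /Cf; case: ifP => // hi.
have h1 := before_tp B i hi; have h2 := a_le_q i; lia.
Qed.

Lemma card_sum (T : finType) (A : {set T}) : #|A| = \sum_(x : T) (x \in A : nat).
Proof.
rewrite -sum1_card big_mkcond /=; apply: eq_bigr => x _; by case: (x \in A).
Qed.

Definition V (i : 'I_n) : {set vtx n q} := [set v | v.1 == i].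
Definition cs (K : {set vtx n q}) := [seq class_count K i | i <- enum 'I_n].

Lemma class_countE K i : class_count K i = #|K :&: V i|.
Proof. by apply: eq_card => v; rewrite !inE. Qed.

Lemma classE (K : {set vtx n q}) i : #|K :&: V i| = \sum_(j : 'I_q) ((i, j) \in K : nat).
Proof.
rewrite card_sum.
transitivity (\sum_(i' : 'I_n) \sum_(j : 'I_q) (((i', j) \in K) && (i' == i) : nat)).
  rewrite pair_big /=; apply: eq_big => [[i' j]|[i' j] _] //=; by rewrite !inE.
rewrite (bigD1 i) //= [X in _ + X = _]big1 ?addn0.
  by apply: eq_bigr => j _; rewrite eqxx andbT.
move=> i' hi; apply: big1 => j _; by rewrite (negbTE hi) andbF.
Qed.

Lemma card_V i : #|V i| = q.
Proof.
rewrite -(setTI (V i)) classE (eq_bigr (fun=> 1)) ?sum1_card ?card_ord //.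
by move=> j _; rewrite inE.
Qed.

Lemma card_by_class (K : {set vtx n q}) : #|K| = \sum_(i : 'I_n) #|K :&: V i|.
Proof.
rewrite card_sum (partition_big (fun v : vtx n q => v.1) xpredT) //=.
apply: eq_bigr => i _; rewrite card_sum big_mkcond /=.
by apply: eq_bigr => v _; rewrite !inE andbC; case: (v.1 == i); case: (v \in K).
Qed.

Lemma nth_cs (K : {set vtx n q}) (i : 'I_n) : nth 0 (cs K) i = class_count K i.
Proof. by rewrite (nth_map i) ?size_enum_ord // nth_ord_enum. Qed.

Lemma size_cs K : size (cs K) = n.
Proof. by rewrite size_map size_enum_ord. Qed.

Lemma sum_cs K : sumn (cs K) = #|K|.
Proof.
rewrite (sumn_nth0 _ _ (size_cs K)) card_by_class; apply: eq_bigr => i _.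
by rewrite nth_cs class_countE.
Qed.

Definition pad := mkseq (nth 0 sigma) n.

Lemma padE : pad = sigma ++ nseq (n - s) 0.
Proof.
apply: (@eq_from_nth _ 0); first by rewrite size_mkseq size_cat size_nseq; lia.
move=> i; rewrite size_mkseq => hi; rewrite nth_mkseq // nth_cat.
case: ifP => // /negbT; rewrite -leqNgt => h; rewrite nth_nseq nth_default //.
by case: ifP.
Qed.

Lemma sorted_pad : sorted geq pad.
Proof.
apply/(sortedP 0) => i; rewrite size_mkseq => hi.
rewrite !nth_mkseq //; last exact: ltnW.
exact: a_mono (leqnSn i).
Qed.

Lemma filter_pad : [seq c <- pad | 0 < c] = sigma.
Proof.
rewrite padE filter_cat filter_nseq /= cats0.
by apply/all_filterP.
Qed.

Lemma count_edge E t : is_edge sigma E ->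
  count (fun u => t < u) (cs E) = count (fun u => t < u) pad.
Proof.
case/andP => _ hp.
have h1 : forall x, count (fun u => t < u) x = count (fun u => t < u) [seq c <- x | 0 < c].
  move=> x; rewrite count_filter; apply: eq_count => u /=; lia.
rewrite h1 (permP hp) -filter_pad -h1 //.
Qed.

Lemma edge_bound E S : is_edge sigma E -> sorted geq (cs S) ->
  #|E :&: S| <= \sum_(m < n) minn (a m) (nth 0 (cs S) m).
Proof.
move=> hE sS; rewrite card_by_class.
apply: leq_trans (_ : \sum_(m < n) minn (nth 0 (cs E) m) (nth 0 (cs S) m) <= _).
  apply: leq_sum => i _; rewrite !nth_cs !class_countE leq_min.
  by rewrite !subset_leq_card // setSI // ?subsetIl ?subsetIr.
have := rearr n (cs E) pad (cs S) (size_cs E) (size_mkseq (nth 0 sigma) n) (size_cs S) sorted_pad sS (fun t => count_edge E t hE).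
move/leq_trans; apply; apply: eq_leq; apply: eq_bigr => m _.
by rewrite nth_mkseq.
Qed.

Lemma sub_card (T : finType) (A : {set T}) m : m <= #|A| ->
  exists2 F : {set T}, F \subset A & #|F| = m.
Proof.
move=> hm; exists [set x in take m (enum A)].
  by apply/subsetP => x; rewrite inE => /mem_take; rewrite mem_enum.
rewrite cardsE (card_uniqP (take_uniq m (enum_uniq (mem A)))) size_takel //.
by rewrite -cardE.
Qed.

Lemma choose_class (T : finType) (Vs A : {set T}) e : A \subset Vs -> e <= #|Vs| ->
  exists F : {set T}, [/\ F \subset Vs, #|F| = e & #|F :&: A| = minn e #|A|].
Proof.
move=> hAV he; case: (leqP e #|A|) => hea.
  have [F hF hFe] := sub_card _ _ _ hea; exists F; split.
  - exact: subset_trans hF hAV.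
  - exact: hFe.
  - rewrite (setIidPl hF) hFe; lia.
have hD : e - #|A| <= #|Vs :\: A|.
  by rewrite cardsD (setIidPr hAV); move: he; lia.
have [G hG hGe] := sub_card _ _ _ hD.
have dAG : A :&: G = set0.
  apply/setP => x; rewrite !inE; case hx: (x \in G); last by rewrite andbF.
  by have := subsetP hG x hx; rewrite !inE => /andP [/negbTE ->].
exists (A :|: G); split.
- by rewrite subUset hAV; apply: subset_trans hG (subsetDl _ _).
- by rewrite cardsU dAG cards0 hGe; lia.
- rewrite setIUl setIid (setIC G) dAG setU0; lia.
Qed.

Lemma cs_le_q (K : {set vtx n q}) x : x \in cs K -> x <= q.
Proof.
case/mapP => i _ ->; rewrite class_countE.
by apply: leq_trans (subset_leq_card (subsetIr K (V i))) _; rewrite card_V.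
Qed.

Lemma map_index_uniq (r : seq nat) : uniq r -> map (index^~ r) r = iota 0 (size r).
Proof.
move=> ur; apply: (@eq_from_nth _ 0); first by rewrite size_map size_iota.
move=> i; rewrite size_map => hi; rewrite (nth_map 0) // nth_iota //.
by rewrite index_uniq.
Qed.

Lemma indep_bound S : k_independent sigma k S ->
  \sum_(m < n) minn (a m) (nth 0 (sort geq (cs S)) m) <= k.
Proof.
move=> hS.
have pss : perm_eq (sort geq (cs S)) (cs S) by rewrite perm_sort.
case/(perm_iotaP 0): pss => Is pIs ssE.
rewrite /= size_cs in pIs.
have uIs : uniq Is by rewrite (perm_uniq pIs) iota_uniq.
have szIs : size Is = n by rewrite (perm_size pIs) size_iota.
pose e (i : 'I_n) := a (index (nat_of_ord i) Is).
have ex : forall i : 'I_n, exists F : {set vtx n q},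
    [/\ F \subset V i, #|F| = e i & #|F :&: S| = minn (e i) (class_count S i)].
  move=> i; have hsub : S :&: V i \subset V i by apply: subsetIr.
  have hle : e i <= #|V i| by rewrite card_V; apply: a_le_q.
  have [F [h1 h2 h3]] := choose_class _ _ _ _ hsub hle.
  exists F; split => //; rewrite class_countE -h3.
  apply: eq_card => v; rewrite !inE; case hv: (v \in F) => //=.
  by have := subsetP h1 v hv; rewrite inE => ->; rewrite andbT.
case/fin_all_exists: ex => Ef HE.
pose E := \bigcup_(i : 'I_n) Ef i.
have EV : forall i, E :&: V i = Ef i.
  move=> i; apply/setP => v; rewrite !inE; apply/andP/idP.
  - case=> /bigcupP [j _ hvj] /eqP hvi.
    case: (HE j) => hj _ _; have := subsetP hj v hvj; rewrite inE => /eqP hvj'.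
    have ej : i = j by apply: val_inj; rewrite -hvi hvj'.
    by rewrite ej.
  - move=> hv; case: (HE i) => hi _ _; split; first by apply/bigcupP; exists i.
    by have := subsetP hi v hv; rewrite inE.
have ccE : forall i, class_count E i = e i.
  by move=> i; rewrite class_countE EV; case: (HE i).
have ccES : forall i, #|(E :&: S) :&: V i| = minn (e i) (class_count S i).
  by move=> i; rewrite setIAC EV; case: (HE i).
have csE : cs E = map (fun j => a (index j Is)) (iota 0 n).
  rewrite /cs -val_enum_ord; elim: (enum 'I_n) => //= x l ->; by rewrite ccE.
have pe : perm_eq (cs E) pad.
  rewrite csE /pad /mkseq.
  apply: perm_trans (_ : perm_eq _ (map (fun j => a (index j Is)) Is)) _.
    by apply: perm_map; rewrite perm_sym.
  have -> : map (fun j => a (index j Is)) Is = map (nth 0 sigma) (map (index^~ Is) Is).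
    by rewrite -map_comp.
  by rewrite map_index_uniq // szIs.
have hE : is_edge sigma E.
  apply/andP; split.
    apply/eqP; rewrite -sum_cs (perm_sumn pe) padE sumn_cat.
    by rewrite (_ : sumn (nseq (n - s) 0) = 0) ?addn0 //; elim: (n - s).
  by have := perm_filter (fun c => 0 < c) pe; rewrite filter_pad.
move/forallP: hS => /(_ E) /implyP /(_ hE) hk.
apply: leq_trans hk; rewrite card_by_class; apply: eq_leq.
rewrite [RHS](eq_bigr (fun i : 'I_n => minn (a (index (nat_of_ord i) Is)) (nth 0 (cs S) i))); last first.
  by move=> i _; rewrite ccES nth_cs.
rewrite -(big_mkord xpredT (fun j => minn (a (index j Is)) (nth 0 (cs S) j))) /index_iota subn0.
rewrite (perm_big Is); last by rewrite perm_sym.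
rewrite (big_nth 0) szIs big_mkord; apply: eq_bigr => m _.
rewrite index_uniq ?szIs // ssE (nth_map 0) // szIs //.
Qed.

Lemma value_le_alpha B : feasible n q k sigma B -> value n q sigma B <= alpha_k n q sigma k.
Proof.
move=> hB.
pose SC := [set v : vtx n q | v.2 < Cf B v.1].
have ccSC : forall i, class_count SC i = Cf B i.
  move=> i; rewrite class_countE classE.
  rewrite (eq_bigr (fun j : 'I_q => (j < Cf B i : nat))); last by move=> j _; rewrite inE.
  by rewrite sum_ltn; apply/minn_idPl; exact: Cf_le_q.
have nthSC : forall m, m < n -> nth 0 (cs SC) m = Cf B m.
  by move=> m hm; rewrite (nth_cs SC (Ordinal hm)) ccSC.
have sSC : sorted geq (cs SC).
  apply/(sortedP 0) => i; rewrite size_cs => hi.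
  rewrite !nthSC //; last exact: ltnW.
  exact: Cf_mono B i i.+1 hB (leqnSn i).
have hind : k_independent sigma k SC.
  apply/forallP => E; apply/implyP => hE.
  apply: leq_trans (edge_bound E SC hE sSC) _; rewrite -(Cf_sum B hB); apply: eq_leq.
  by apply: eq_bigr => m _; rewrite nthSC.
rewrite /alpha_k; apply: leq_trans (leq_bigmax_cond (F := fun S : {set vtx n q} => #|S|) SC hind).
rewrite value_sumC // card_by_class; apply: eq_leq; apply: eq_bigr => i _.
by rewrite -class_countE ccSC.
Qed.

Lemma main_core :
  (exists2 B, maximal_feasible n q k sigma B & value n q sigma B = alpha_k n q sigma k) /\
  (forall B, maximal_feasible n q k sigma B -> value n q sigma B <= alpha_k n q sigma k).
Proof.
split; last by move=> B [hB _]; exact: value_le_alpha.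
have hpos : 0 < #|[pred S : {set vtx n q} | k_independent sigma k S]|.
  apply/card_gt0P; exists set0; rewrite inE.
  by apply/forallP => E; apply/implyP => _; rewrite setI0 cards0.
case: (eq_bigmax_cond (fun S : {set vtx n q} => #|S|) hpos) => S hS halpha.
rewrite inE in hS.
have hA := indep_bound S hS.
pose ss := sort geq (cs S).
have pss : perm_eq ss (cs S) by rewrite perm_sort.
have sss : sorted geq ss by apply: sort_sorted => x y; exact: leq_total.
have szss : size ss = n by rewrite size_sort size_cs.
have s1n : s.-1 < n by move: s_gt0 Hsn; lia.
pose f0 m := nth 0 ss (minn m s.-1).
have hInv : Inv f0.
  split.
  - move=> i j /andP [hij _]; apply: sorted_mono => //; lia.
  - move=> m /andP [hm _]; rewrite /f0; congr (nth 0 ss _); lia.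
  - have hm : minn 0 s.-1 < size ss by rewrite szss; lia.
    by have := mem_nth 0 hm; rewrite (perm_mem pss) => /cs_le_q.
  - apply: leq_trans hA; rewrite sum_sigma_n; apply: eq_leq; apply: eq_bigr => i _.
    by rewrite /f0; congr (minn _ (nth 0 ss _)); have := ltn_ord i; lia.
have [g [hg hgk hfg]] := grow f0 hInv.
have hB := feasible_of_Inv g hg hgk.
have [B' [hB' hBB']] := maximize (mkseq g n) hB.
exists B' => //.
apply/eqP; rewrite eqn_leq value_le_alpha ?andTb; last by case: hB'.
rewrite /alpha_k halpha.
apply: leq_trans (value_ge_sum B' (proj1 hB')).
apply: leq_trans hBB'.
have e1 : \sum_(m < n) nth 0 (mkseq g n) m = \sum_(m < n) g m.
  by apply: eq_bigr => m _; rewrite nth_mkseq.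
rewrite e1; apply: leq_trans hfg.
rewrite -sum_cs -(perm_sumn pss) (sumn_nth0 _ _ szss).
apply: leq_sum => m _; rewrite /f0; apply: sorted_mono => //; lia.
Qed.

End Main.

Theorem theorem2p8 (sigma : seq nat) (n q k : nat) :
  sorted geq sigma ->
  all (fun a => 0 < a) sigma ->
  0 < sumn sigma ->
  size sigma <= n ->
  nth 0 sigma 0 <= q ->
  1 <= k <= (sumn sigma).-1 ->
  (exists2 B, maximal_feasible n q k sigma B & value n q sigma B = alpha_k n q sigma k) /\
  (forall B, maximal_feasible n q k sigma B -> value n q sigma B <= alpha_k n q sigma k).
Proof.
move=> Hsig Hpos Hr Hsn Hq /andP [hk1 hk2].
have Hk : k < sumn sigma by move: Hr hk2; lia.
exact: main_core.
Qed.
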